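(* Let $W\in\mathbb{C}[x_1,\dots,x_n]$ be a nondegenerate quasihomogeneous polynomial, $G$ a finite subgroup of $G_W$, and $g\in G$ with $n_g>0$. Then $W^g$ is a nondegenerate quasihomogeneous polynomial in $R^g$, and the centralizer $C_G(g)$ (acting on $V^g$ by restriction) is a finite subgroup of the symmetry group $G_{W^g}$.
   Context: $W$ is quasihomogeneous: there are positive integers $w_1,\dots,w_n,d$ with $W(\lambda^{w_1}x_1,\dots,\lambda^{w_n}x_n)=\lambda^dW$; the charge of $x_i$ is $q_i=w_i/d$. Nondegenerate means the Jacobi ring $\mathbb{C}[x]/(\partial W/\partial x_1,\dots,\partial W/\partial x_n)$ is finite dimensional. $\mathrm{GL}_n(\mathbb{C})$ acts on $V=\bigoplus\mathbb{C}x_i$ by $g\cdot x_i=\sum_j g_{ij}x_j$ and on polynomials by $(g\cdot f)(x)=f(g\cdot x_1,\dots,g\cdot x_n)$. $G_W=\{g\in\mathrm{GL}_n(\mathbb{C}): g\cdot W=W,\ g_{ij}=0\text{ if }w_i\ne w_j\}$ (the symmetry group; defined likewise for any nondegenerate quasihomogeneous polynomial). For $g\in G$, choose eigenvectors $y_1,\dots,y_n\in V$ of $g$ forming a basis, with eigenvalues $\lambda_1,\dots,\lambda_n$, such that $y_i$ has the same weight/charge as $x_i$ (possible since $g$ is block diagonal by weight). Let $W'$ be the polynomial with $W'(y_1,\dots,y_n)=W(x_1,\dots,x_n)$. Let $V^g=\ker(E_n-g)$, $n_g=\dim V^g$, $I^g=\{i:\lambda_i=1\}=\{i_1,\dots,i_{n_g}\}$,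 $R^g=\mathbb{C}[y_{i_1},\dots,y_{i_{n_g}}]$, and $W^g=W'|_{y_i=0\ (i\notin I^g)}\in R^g$. *)

(* Defs.v *)
From HB Require Import structures.
From mathcomp Require Import all_boot all_order all_algebra.
From mathcomp Require Import reals complex.
From mathcomp Require Import mpoly.

Set Implicit Arguments.
Unset Strict Implicit.
Unset Printing Implicit Defensive.

Import Order.TTheory GRing.Theory Num.Theory.
Local Open Scope ring_scope.

Section Defs.
Variable (C : fieldType).

Definition qh_subst (n : nat) (w : 'I_n -> nat) (lam : C) :
  n.-tuple {mpoly C[n]} := [tuple (lam ^+ w i) *: 'X_i | i < n].

Definition quasihomogeneous_wd (n : nat) (W : {mpoly C[n]})
    (w : 'I_n -> nat) (d : nat) : Prop :=
  [/\ forall i, (0 < w i)%N, (0 < d)%N &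
      forall lam : C, W \mPo qh_subst w lam = lam ^+ d *: W].

Definition in_jacobian_ideal (n : nat) (W p : {mpoly C[n]}) : Prop :=
  exists a : 'I_n -> {mpoly C[n]}, p = \sum_(i < n) a i * mderiv i W.

(* Nondegenerate: the Jacobi ring C[x]/(∂W/∂x_i) is finite dimensional,
   i.e. spanned (as a C-vector space) by the classes of finitely many
   polynomials. *)
Definition nondegenerate_W (n : nat) (W : {mpoly C[n]}) : Prop :=
  exists B : seq {mpoly C[n]}, forall p : {mpoly C[n]},
    exists c : 'I_(size B) -> C,
      in_jacobian_ideal W (p - \sum_(k < size B) c k *: B`_k).

Definition lin_subst (n : nat) (g : 'M[C]_n) : n.-tuple {mpoly C[n]} :=
  [tuple \sum_(j < n) g i j *: 'X_j | i < n].

Definition mx_act (n : nat) (g : 'M[C]_n) (f : {mpoly C[n]}) : {mpoly C[n]} :=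
  f \mPo lin_subst g.

Definition in_sym_group (n : nat) (W : {mpoly C[n]}) (w : 'I_n -> nat)
    (g : 'M[C]_n) : Prop :=
  [/\ g \in unitmx, mx_act g W = W &
      forall i j, w i != w j -> g i j = 0].

Definition finite_subgroup (n : nat) (G : seq 'M[C]_n) : Prop :=
  [/\ (1%:M : 'M[C]_n) \in G,
      forall a b, a \in G -> b \in G -> a *m b \in G &
      forall a, a \in G -> a \in unitmx /\ invmx a \in G].

Definition fixed_idx (n : nat) (lam : 'rV[C]_n) : {set 'I_n} :=
  [set i | lam 0 i == 1].

(* restriction y_i ↦ 0 for i ∉ I, y_{i_k} ↦ k-th variable of R^g
   (I = {i_1 < … < i_m} enumerated increasingly) *)
Definition restr_subst (n : nat) (I : {set 'I_n}) :
    n.-tuple {mpoly C[#|I|]} :=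
  [tuple \sum_(k < #|I| | enum_val k == i) 'X_k | i < n].

(* W' defined by W'(y_1,…,y_n) = W(x_1,…,x_n), where y_i = Σ_j P_ij x_j *)
Definition change_basis (n : nat) (P : 'M[C]_n) (W : {mpoly C[n]}) :
  {mpoly C[n]} := W \mPo lin_subst (invmx P).

Definition Wfix (n : nat) (P : 'M[C]_n) (lam : 'rV[C]_n) (W : {mpoly C[n]}) :
  {mpoly C[#|fixed_idx lam|]} :=
  change_basis P W \mPo restr_subst (fixed_idx lam).

Definition wfix (n : nat) (lam : 'rV[C]_n) (w : 'I_n -> nat) :
  'I_#|fixed_idx lam| -> nat := fun k => w (enum_val k).

(* matrix of h|_{V^g} in the basis y_{i_1},…,y_{i_m}:
   h·y_{i_a} = Σ_b M_ab y_{i_b}, where (P h P^{-1}) is the matrix of h in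
   the basis y_1,…,y_n *)
Definition restr_mx (n : nat) (P : 'M[C]_n) (lam : 'rV[C]_n) (h : 'M[C]_n) :
  'M[C]_#|fixed_idx lam| :=
  \matrix_(a, b) (P *m h *m invmx P) (enum_val a) (enum_val b).

End Defs.

Arguments Wfix {C n} P lam W.
Arguments wfix {C n} lam w _.
Arguments restr_mx {C n} P lam h.
Arguments restr_subst {C n} I.

(* Main.v *)
Require Import Defs.
From HB Require Import structures.
From mathcomp Require Import all_boot all_order all_algebra.
From mathcomp Require Import reals complex.
From mathcomp Require Import mpoly.
Import GRing.Theory.
Local Open Scope ring_scope.

Set Implicit Arguments. Unset Strict Implicit.








Section Gen.
Variable C : fieldType.

Lemma mderivXi n (i l : 'I_n) : ('X_l : {mpoly C[n]})^`M(i) = ((l == i)%:R : C)%:MP.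
Proof.
rewrite mderivX mnm1E; case: eqP => [->|_]; last by rewrite scale0r mpolyC0.
have -> : (U_(i) - U_(i) = 0)%MM by apply/mnmP=> j; rewrite mnmBE subnn mnm0E.
by rewrite mpolyX0 scale1r mpolyC1.
Qed.

Definition chainP n k (A : n.-tuple {mpoly C[k]}) (p : {mpoly C[n]}) :=
  forall j, (p \mPo A)^`M(j) = \sum_(i < n) ((p^`M(i)) \mPo A) * (tnth A i)^`M(j).

Lemma chainP0 n k (A : n.-tuple {mpoly C[k]}) : chainP A 0.
Proof. by move=> j; rewrite comp_mpoly0 mderiv0 big1 // => i _; rewrite mderiv0 comp_mpoly0 mul0r. Qed.

Lemma chainP1 n k (A : n.-tuple {mpoly C[k]}) : chainP A 1.
Proof.
move=> j; rewrite comp_mpoly1 -mpolyC1 mderivC big1 // => i _.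
by rewrite mderivC comp_mpoly0 mul0r.
Qed.

Lemma chainPD n k (A : n.-tuple {mpoly C[k]}) p q :
  chainP A p -> chainP A q -> chainP A (p + q).
Proof.
move=> hp hq j; rewrite comp_mpolyD mderivD hp hq -big_split /=.
by apply: eq_bigr => i _; rewrite mderivD comp_mpolyD mulrDl.
Qed.

Lemma chainPZ n k (A : n.-tuple {mpoly C[k]}) c p :
  chainP A p -> chainP A (c *: p).
Proof.
move=> hp j; rewrite comp_mpolyZ mderivZ hp scaler_sumr.
by apply: eq_bigr => i _; rewrite mderivZ comp_mpolyZ scalerAl.
Qed.

Lemma chainPM n k (A : n.-tuple {mpoly C[k]}) p q :
  chainP A p -> chainP A q -> chainP A (p * q).
Proof.
move=> hp hq j; rewrite rmorphM /= mderivM hp hq mulr_suml mulr_sumr -big_split /=.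
apply: eq_bigr => i _; rewrite mderivM rmorphD /= !rmorphM /=.
by rewrite mulrDl; congr (_ + _); rewrite -!mulrA; congr (_ * _); rewrite mulrC // mulrCA.
Qed.

Lemma chainPX n k (A : n.-tuple {mpoly C[k]}) l : chainP A 'X_l.
Proof.
move=> j; rewrite comp_mpolyXU -tnth_nth (bigD1 l) //= big1 ?addr0.
  by rewrite mderivXi eqxx mpolyC1 comp_mpoly1 mul1r.
by move=> i /negPf hi; rewrite mderivXi eq_sym hi mpolyC0 comp_mpoly0 mul0r.
Qed.

Lemma chain_rule n k (A : n.-tuple {mpoly C[k]}) p : chainP A p.
Proof.
rewrite (mpolyE p); elim/big_ind: _ => //; [exact: chainP0| exact: chainPD|].
move=> m _; apply: chainPZ; rewrite mpolyXE_id.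
elim/big_ind: _ => //; [exact: chainP1| exact: chainPM|].
move=> i _; elim: (m i) => [|e ih]; first by rewrite expr0; exact: chainP1.
by rewrite exprS; apply: chainPM => //; exact: chainPX.
Qed.

Lemma comp_mpolyA n k l (A : n.-tuple {mpoly C[k]}) (B : k.-tuple {mpoly C[l]}) p :
  (p \mPo A) \mPo B = p \mPo [tuple (tnth A i) \mPo B | i < n].
Proof.
rewrite [p \mPo A]comp_mpolyE [RHS]comp_mpolyE raddf_sum /=; apply: eq_bigr => m _.
rewrite comp_mpolyZ rmorph_prod /=; congr (_ *: _); apply: eq_bigr => i _.
by rewrite rmorphXn /= tnth_mktuple.
Qed.

End Gen.

Section Lin.
Variable C : fieldType.

Definition lsub n k (M : 'M[C]_(n, k)) : n.-tuple {mpoly C[k]} :=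
  [tuple \sum_(j < k) M i j *: 'X_j | i < n].

Lemma lsub_comp n k l (M : 'M[C]_(n, k)) (N : 'M[C]_(k, l)) :
  [tuple tnth (lsub M) i \mPo lsub N | i < n] = lsub (M *m N).
Proof.
apply: eq_from_tnth => i; rewrite !tnth_mktuple raddf_sum /=.
under eq_bigr => j _ do rewrite comp_mpolyZ comp_mpolyXU -tnth_nth tnth_mktuple scaler_sumr.
rewrite exchange_big /=; apply: eq_bigr => j _; rewrite mxE scaler_suml.
by apply: eq_bigr => a _; rewrite scalerA.
Qed.

Lemma comp_lsub n k l (M : 'M[C]_(n, k)) (N : 'M[C]_(k, l)) p :
  p \mPo lsub M \mPo lsub N = p \mPo lsub (M *m N).
Proof. by rewrite comp_mpolyA lsub_comp. Qed.

Lemma lsub1 n : lsub (1%:M : 'M[C]_n) = [tuple 'X_i | i < n].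
Proof.
apply: eq_from_tnth => i; rewrite !tnth_mktuple (bigD1 i) //= big1 ?addr0.
  by rewrite mxE eqxx scale1r.
by move=> j hj; rewrite mxE eq_sym (negPf hj) scale0r.
Qed.

Lemma comp_lsub1 n p : p \mPo lsub (1%:M : 'M[C]_n) = p.
Proof. by rewrite lsub1 comp_mpoly_id. Qed.

Lemma deriv_lsub n k (M : 'M[C]_(n, k)) i l :
  (tnth (lsub M) i)^`M(l) = (M i l)%:MP.
Proof.
rewrite tnth_mktuple raddf_sum /= (bigD1 l) //= big1 ?addr0.
  by rewrite mderivZ mderivXi eqxx mpolyC1 -mul_mpolyC mulr1.
by move=> j hj; rewrite mderivZ mderivXi (negPf hj) mpolyC0 scaler0.
Qed.

Lemma chain_lsub n k (M : 'M[C]_(n, k)) p l :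
  (p \mPo lsub M)^`M(l) = \sum_(i < n) M i l *: (p^`M(i) \mPo lsub M).
Proof.
rewrite chain_rule; apply: eq_bigr => i _.
by rewrite deriv_lsub mulrC mul_mpolyC.
Qed.

Lemma jac0 n (W : {mpoly C[n]}) : in_jacobian_ideal W 0.
Proof. by exists (fun=> 0); rewrite big1 // => i _; rewrite mul0r. Qed.

Lemma jacD n (W p q : {mpoly C[n]}) :
  in_jacobian_ideal W p -> in_jacobian_ideal W q -> in_jacobian_ideal W (p + q).
Proof.
move=> [a ->] [b ->]; exists (fun i => a i + b i); rewrite -big_split /=.
by apply: eq_bigr => i _; rewrite mulrDl.
Qed.

Lemma jacM n (W p q : {mpoly C[n]}) :
  in_jacobian_ideal W p -> in_jacobian_ideal W (q * p).
Proof.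
move=> [a ->]; exists (fun i => q * a i); rewrite mulr_sumr.
by apply: eq_bigr => i _; rewrite mulrA.
Qed.

Lemma jac_sum n (W : {mpoly C[n]}) (I : finType) (F : I -> {mpoly C[n]}) :
  (forall i, in_jacobian_ideal W (F i)) -> in_jacobian_ideal W (\sum_i F i).
Proof.
move=> h; elim/big_ind: _ => //; [exact: jac0 | exact: jacD].
Qed.

Lemma jac_der n (W : {mpoly C[n]}) i : in_jacobian_ideal W (W^`M(i)).
Proof.
exists (fun j => ((j == i)%:R : C)%:MP); rewrite (bigD1 i) //= big1 ?addr0.
  by rewrite eqxx mpolyC1 mul1r.
by move=> j /negPf ->; rewrite mpolyC0 mul0r.
Qed.

Lemma sum_cast (V : nmodType) N M (e : N = M) (F : 'I_M -> V) :
  \sum_(k < N) F (cast_ord e k) = \sum_(k < M) F k.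
Proof.
by subst; apply: eq_bigr => k _; congr F; apply: val_inj.
Qed.

Lemma nd_transfer n k (W : {mpoly C[n]}) (A : n.-tuple {mpoly C[k]}) :
  nondegenerate_W W -> (forall q, exists p, q = p \mPo A) ->
  (forall i, in_jacobian_ideal (W \mPo A) ((W^`M(i)) \mPo A)) ->
  nondegenerate_W (W \mPo A).
Proof.
move=> [B hB] hsurj hder.
exists (map (comp_mpoly A) B) => q.
have [p ->] := hsurj q.
have [c [a hc]] := hB p.
have e := size_map (comp_mpoly A) B.
exists (fun k => c (cast_ord e k)).
have -> : \sum_(k0 < size [seq comp_mpoly A i | i <- B])
     c (cast_ord e k0) *: [seq comp_mpoly A i | i <- B]`_k0
   = \sum_(k0 < size [seq comp_mpoly A i | i <- B])
     (fun k1 : 'I_(size B) => c k1 *: (B`_k1 \mPo A)) (cast_ord e k0).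
  apply: eq_bigr => j _ /=; congr (_ *: _).
  by rewrite (nth_map 0) // -e ltn_ord.
rewrite (sum_cast e (fun k1 : 'I_(size B) => c k1 *: (B`_k1 \mPo A))).
have -> : \sum_(k1 < size B) c k1 *: (B`_k1 \mPo A)
   = (\sum_(k1 < size B) c k1 *: B`_k1) \mPo A.
  by rewrite raddf_sum; apply: eq_bigr => j _ /=; rewrite comp_mpolyZ.
rewrite -comp_mpolyB hc raddf_sum /=; apply: jac_sum => i.
by rewrite rmorphM /=; apply: jacM.
Qed.

End Lin.

Section Fix.
Variable C : fieldType.
Variable n : nat.
Variable lam : 'rV[C]_n.
Local Notation I := (fixed_idx lam).
Local Notation m := #|fixed_idx lam|.

Definition Rm : 'M[C]_(n, m) := \matrix_(i < n, k < m) ((enum_val k == i)%:R).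

Lemma inI j : (j \in I) = (lam 0 j == 1).
Proof. by rewrite inE. Qed.

Lemma restr_lsub : restr_subst I = lsub Rm.
Proof.
apply: eq_from_tnth => i; rewrite !tnth_mktuple big_mkcond /=.
by apply: eq_bigr => k _; rewrite mxE; case: eqP => _; rewrite ?scale1r ?scale0r.
Qed.

Lemma sumI (f : 'I_n -> C) j :
  \sum_(c < m) (enum_val c == j)%:R * f (enum_val c) = if j \in I then f j else 0.
Proof.
case: ifP => hj.
  rewrite (bigD1 (enum_rank_in hj j)) //= enum_rankK_in // eqxx mul1r big1 ?addr0 //.
  move=> c hc; case: eqP => e; last by rewrite mul0r.
  by move: hc; have := enum_valK_in hj c; rewrite e => ->; rewrite eqxx.
apply: big1 => c _; case: eqP => e; last by rewrite mul0r.
by move: (enum_valP c); rewrite e hj.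
Qed.

Lemma RmTRm : Rm^T *m Rm = 1%:M.
Proof.
apply/matrixP => a b; rewrite !mxE (bigD1 (enum_val a)) //= !mxE eqxx mul1r.
rewrite big1 ?addr0.
  by rewrite (inj_eq enum_val_inj) eq_sym.
by move=> i hi; rewrite !mxE eq_sym (negPf hi) mul0r.
Qed.

Lemma diagRm : diag_mx lam *m Rm = Rm.
Proof.
apply/matrixP => i k; rewrite mul_diag_mx !mxE; case: eqP => e; last by rewrite mulr0.
by move: (enum_valP k); rewrite e inI => /eqP ->; rewrite mul1r.
Qed.

Lemma Rm_diag (w : 'I_n -> nat) (t : C) :
  Rm *m diag_mx (\row_k t ^+ wfix lam w k) = diag_mx (\row_i t ^+ w i) *m Rm.
Proof.
apply/matrixP => i k; rewrite mul_diag_mx mul_mx_diag !mxE /wfix.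
by case: eqP => e; rewrite ?mulr0 ?mul0r // e mulr1 mul1r.
Qed.

Lemma van (M : 'M[C]_n) i j : M *m diag_mx lam = diag_mx lam *m M ->
  lam 0 i = 1 -> lam 0 j != 1 -> M i j = 0 /\ M j i = 0.
Proof.
move=> hM hi hj.
have e : forall a b, M a b * lam 0 b = lam 0 a * M a b.
  by move=> a b; move/matrixP: hM => /(_ a b); rewrite mul_diag_mx mul_mx_diag !mxE.
have hj' : lam 0 j - 1 != 0 by rewrite subr_eq0.
split.
  have := e i j; rewrite hi mul1r => /eqP; rewrite -subr_eq0 -{2}(mulr1 (M i j)) -mulrBr.
  by rewrite mulf_eq0 (negPf hj') orbF => /eqP.
have := e j i; rewrite hi mulr1 => /eqP; rewrite eq_sym -subr_eq0 -{2}(mul1r (M j i)) -mulrBl.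
by rewrite mulf_eq0 (negPf hj') orFb => /eqP.
Qed.

End Fix.

Lemma qh_lsub (C : fieldType) n (w : 'I_n -> nat) (t : C) :
  qh_subst w t = lsub (diag_mx (\row_i t ^+ w i)).
Proof.
apply: eq_from_tnth => i; rewrite !tnth_mktuple (bigD1 i) //= big1 ?addr0.
  by rewrite mxE eqxx mulr1n mxE.
by move=> j hj; rewrite mxE eq_sym (negPf hj) mulr0n scale0r.
Qed.

Lemma bd_comm (C : fieldType) n (w : 'I_n -> nat) (M : 'M[C]_n) (t : C) :
  (forall i j, w i != w j -> M i j = 0) ->
  M *m diag_mx (\row_i t ^+ w i) = diag_mx (\row_i t ^+ w i) *m M.
Proof.
move=> h; apply/matrixP => i j; rewrite mul_diag_mx mul_mx_diag !mxE.
case: (eqVneq (w i) (w j)) => e; first by rewrite e mulrC.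
by rewrite h // mulr0 mul0r.
Qed.

Lemma inv_comm (C : fieldType) n (P D : 'M[C]_n) : P \in unitmx ->
  P *m D = D *m P -> invmx P *m D = D *m invmx P.
Proof.
move=> hP e.
have := congr1 (fun X => invmx P *m X *m invmx P) e.
by rewrite /= !mulmxA mulVmx // mul1mx -!mulmxA mulmxV // mulmx1.
Qed.

Lemma comm_bd (R : realType) n (w : 'I_n -> nat) (M : 'M[R[i]]_n) :
  M *m diag_mx (\row_i 2%:R ^+ w i) = diag_mx (\row_i 2%:R ^+ w i) *m M ->
  (forall i j, w i != w j -> M i j = 0).
Proof.
move=> hM i j hw; move/matrixP: hM => /(_ i j); rewrite mul_diag_mx mul_mx_diag !mxE.
move=> /eqP; rewrite mulrC -subr_eq0 -mulrBl mulf_eq0 => /orP [|/eqP //].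
rewrite subr_eq0 -!natrX Num.Theory.eqr_nat eqn_exp2l // => h.
by move: hw; rewrite (eqP h) eqxx.
Qed.

Section Fix2.
Variable C : fieldType.
Variable n : nat.
Variable lam : 'rV[C]_n.
Local Notation I := (fixed_idx lam).
Local Notation m := #|fixed_idx lam|.

Definition Rmat (M : 'M[C]_n) : 'M[C]_m := \matrix_(a, b) M (enum_val a) (enum_val b).

Lemma lam_ev (k : 'I_m) : lam 0 (enum_val k) = 1.
Proof. by apply/eqP; rewrite -inI; exact: enum_valP. Qed.

Lemma restr_mul (M1 M2 : 'M[C]_n) : M2 *m diag_mx lam = diag_mx lam *m M2 ->
  Rmat (M1 *m M2) = Rmat M1 *m Rmat M2.
Proof.
move=> h2; apply/matrixP => a b; rewrite !mxE.
under [RHS]eq_bigr => c _ do rewrite !mxE.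
rewrite -(big_enum_val (fun j => M1 (enum_val a) j * M2 j (enum_val b))) /=.
rewrite [RHS]big_mkcond /=; apply: eq_bigr => j _; case: ifP => // hj.
have hj' : lam 0 j != 1 by rewrite -inI hj.
by have [_ ->] := van h2 (lam_ev b) hj'; rewrite mulr0.
Qed.

Lemma Rmat1 : Rmat 1%:M = 1%:M.
Proof. by apply/matrixP => a b; rewrite !mxE (inj_eq enum_val_inj). Qed.

Lemma RmR (M : 'M[C]_n) : M *m diag_mx lam = diag_mx lam *m M ->
  Rm lam *m Rmat M = M *m Rm lam.
Proof.
move=> hM; apply/matrixP => j k; rewrite !mxE.
under eq_bigr => c _ do rewrite !mxE.
rewrite (sumI lam (fun i => M i (enum_val k))).
rewrite [RHS](bigD1 (enum_val k)) //= big1 ?addr0; last first.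
  by move=> i hi; rewrite mxE eq_sym (negPf hi) mulr0.
rewrite mxE eqxx mulr1; case: ifP => // hj.
have hj' : lam 0 j != 1 by rewrite -inI hj.
by have [_ ->] := van hM (lam_ev k) hj'.
Qed.

End Fix2.

Lemma lin_lsub (C : fieldType) n (g : 'M[C]_n) : lin_subst g = lsub g.
Proof. by []. Qed.

Lemma sum_single (C : fieldType) (V : lmodType C) n (c : 'I_n -> C) (F : 'I_n -> V) j :
  (forall l, l != j -> c l = 0) -> \sum_l c l *: F l = c j *: F j.
Proof.
move=> h; rewrite (bigD1 j) //= big1 ?addr0 // => l hl.
by rewrite h // scale0r.
Qed.

Lemma RmE (C : fieldType) n (lam : 'rV[C]_n) i k : Rm lam i k = (enum_val k == i)%:R.
Proof. by rewrite mxE. Qed.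

Lemma ev_surj (C : fieldType) n (lam : 'rV[C]_n) j : j \in fixed_idx lam ->
  exists c : 'I_#|fixed_idx lam|, enum_val c = j.
Proof. by move=> hj; exists (enum_rank_in hj j); exact: enum_rankK_in. Qed.

Unset Implicit Arguments. Set Strict Implicit.

Theorem lemma4p1 (R : realType) (n : nat) (W : {mpoly R[i][n]})
    (w : 'I_n -> nat) (d : nat)
    (hqh : quasihomogeneous_wd W w d) (hnd : nondegenerate_W W)
    (G : seq 'M[R[i]]_n) (hG : finite_subgroup G)
    (hGW : forall g, g \in G -> in_sym_group W w g)
    (g : 'M[R[i]]_n) (hg : g \in G)
    (P : 'M[R[i]]_n) (lam : 'rV[R[i]]_n)
    (hPunit : P \in unitmx)
    (hPeig : P *m g = diag_mx lam *m P)
    (hPw : forall i j, w i != w j -> P i j = 0)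
    (hng : (0 < \rank (kermx (1%:M - g)))%N) :
  [/\ quasihomogeneous_wd (Wfix P lam W) (wfix lam w) d,
      nondegenerate_W (Wfix P lam W),
      (forall h, h \in G -> h *m g = g *m h ->
         in_sym_group (Wfix P lam W) (wfix lam w) (restr_mx P lam h)) &
      (forall h1 h2, h1 \in G -> h1 *m g = g *m h1 ->
         h2 \in G -> h2 *m g = g *m h2 ->
         restr_mx P lam (h1 *m h2) = restr_mx P lam h1 *m restr_mx P lam h2)].
Proof.
set Pi := invmx P.
have hPPi : P *m Pi = 1%:M by exact: mulmxV.
have hPiP : Pi *m P = 1%:M by exact: mulVmx.
have eWf : Wfix P lam W = W \mPo lsub (Pi *m Rm lam).
  by rewrite /Wfix /change_basis restr_lsub lin_lsub comp_lsub.
have hD : Pi *m diag_mx lam = g *m Pi.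
  have := congr1 (fun X => Pi *m X *m Pi) hPeig.
  by rewrite /= !mulmxA hPiP mul1mx -!mulmxA hPPi mulmx1 => ->.
have [hw hd hW] := hqh.
have hMD : forall h, h *m g = g *m h ->
    (P *m h *m Pi) *m diag_mx lam = diag_mx lam *m (P *m h *m Pi).
  move=> h hc; rewrite -!mulmxA hD !mulmxA -(mulmxA P h g) hc mulmxA hPeig.
  by rewrite ?mulmxA.
have hM2 : forall h, h \in G -> forall t : R[i],
    (P *m h *m Pi) *m diag_mx (\row_i t ^+ w i)
      = diag_mx (\row_i t ^+ w i) *m (P *m h *m Pi).
  move=> h hh t; have [_ _ hbd] := hGW h hh.
  have e1 := bd_comm t hPw; have e2 := bd_comm t hbd.
  have e3 := inv_comm hPunit e1.
  by rewrite -!mulmxA e3 !mulmxA -(mulmxA P h) e2 mulmxA e1.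
split.
- split; [by move=> k; exact: hw | exact: hd |].
  move=> t; rewrite eWf qh_lsub comp_lsub -mulmxA Rm_diag mulmxA.
  have e1 := bd_comm t hPw; have e3 := inv_comm hPunit e1.
  by rewrite /Pi e3 -mulmxA -comp_lsub -qh_lsub hW comp_mpolyZ.
- have hnd' : nondegenerate_W (W \mPo lsub Pi).
    apply: nd_transfer; [exact: hnd | |].
      by move=> q; exists (q \mPo lsub P); rewrite comp_lsub hPPi comp_lsub1.
    move=> i.
    have -> : W^`M(i) \mPo lsub Pi = \sum_j P j i *: (W \mPo lsub Pi)^`M(j).
      transitivity (\sum_l (Pi *m P) l i *: (W^`M(l) \mPo lsub Pi)).
        rewrite hPiP (@sum_single _ _ _ _ _ i); first by rewrite mxE eqxx scale1r.
        by move=> l hl; rewrite mxE (negPf hl).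
      under [RHS]eq_bigr => j _ do rewrite chain_lsub scaler_sumr.
      rewrite [RHS]exchange_big /=; apply: eq_bigr => l _; rewrite mxE scaler_suml.
      by apply: eq_bigr => j _; rewrite scalerA mulrC.
    apply: jac_sum => j; rewrite -mul_mpolyC; apply: jacM; exact: jac_der.
  rewrite eWf -comp_lsub; apply: nd_transfer; [exact: hnd' | |].
    by move=> q; exists (q \mPo lsub (Rm lam)^T); rewrite comp_lsub RmTRm comp_lsub1.
  move=> j; case hj: (j \in fixed_idx lam).
    have [c hc] := ev_surj hj.
    have -> : (W \mPo lsub Pi)^`M(j) \mPo lsub (Rm lam)
        = (W \mPo lsub Pi \mPo lsub (Rm lam))^`M(c).
      rewrite [RHS]chain_lsub (@sum_single _ _ _ _ _ j).
        rewrite RmE hc eqxx scale1r; reflexivity.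
      move=> i hi; rewrite RmE hc eq_sym (negPf hi); exact: mulr0n.
    exact: jac_der.
  set W' := W \mPo lsub Pi.
  have hinv : W' \mPo lsub (diag_mx lam) = W'.
    have [_ hgW _] := hGW g hg.
    by rewrite /W' comp_lsub hD -comp_lsub; move: hgW; rewrite /mx_act lin_lsub => ->.
  have hdj : W'^`M(j) = lam 0 j *: (W'^`M(j) \mPo lsub (diag_mx lam)).
    rewrite -{1}hinv [LHS](chain_lsub (diag_mx lam) W' j) (@sum_single _ _ _ _ _ j).
      rewrite mxE eqxx mulr1n; reflexivity.
    move=> i hi; rewrite mxE (negPf hi) mulr0n; reflexivity.
  have hj' : lam 0 j != 1 by rewrite -inI hj.
  have : W'^`M(j) \mPo lsub (Rm lam) = lam 0 j *: (W'^`M(j) \mPo lsub (Rm lam)).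
    by rewrite {1}hdj comp_mpolyZ comp_lsub diagRm.
  move/eqP; rewrite -subr_eq0 -{1}(scale1r (W'^`M(j) \mPo lsub (Rm lam))) -scalerBl.
  rewrite scaler_eq0 subr_eq0 eq_sym (negPf hj') /= => /eqP ->.
  exact: jac0.
- move=> h hh hc.
  have [hG1 hGM hGV] := hG.
  have [hhu hhinG] := hGV h hh.
  have hci : invmx h *m g = g *m invmx h by apply: inv_comm.
  split.
  + have : restr_mx P lam h *m restr_mx P lam (invmx h) = 1%:M.
      rewrite /restr_mx -/(Rmat lam _) -/(Rmat lam _) -restr_mul; last exact: hMD.
      have -> : P *m h *m Pi *m (P *m invmx h *m Pi) = 1%:M.
        by rewrite !mulmxA -(mulmxA _ Pi P) hPiP mulmx1 -(mulmxA P h) (mulmxV hhu) mulmx1.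
      exact: Rmat1.
    by case/mulmx1_unit.
  + rewrite /mx_act lin_lsub eWf comp_lsub.
    have e : Rm lam *m restr_mx P lam h = (P *m h *m Pi) *m Rm lam.
      by rewrite -RmR; last exact: hMD.
    rewrite -mulmxA e !mulmxA hPiP mul1mx -mulmxA -comp_lsub.
    have [_ hhW _] := hGW h hh; move: hhW; rewrite /mx_act lin_lsub => ->; reflexivity.
  + move=> a b hab; rewrite mxE.
    by apply: (comm_bd (w := w)); [apply: hM2 | exact: hab].
- move=> h1 h2 hh1 hc1 hh2 hc2.
  rewrite /restr_mx -!/(Rmat lam _) -restr_mul; last exact: hMD.
  congr Rmat.
  by rewrite !mulmxA -(mulmxA _ Pi P) hPiP mulmx1.
Qed.
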